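(* Let $\mathcal X\subseteq\mathbb R$ be an interval, $\omega\ge0$ a weight on $\mathcal X$, $Q(\phi)=\int_{\mathcal X}\phi(x)\omega(x)dx$, and $Q_N(\phi)=\sum_{i=0}^N\omega_{N,i}\phi(x_{N,i})$ with distinct nodes $x_{N,i}\in\mathcal X$ and real weights $\omega_{N,i}$. Assume $Q_N(\phi)=Q(\phi)$ for all $\phi\in P_{2N}$. Let $I_N$ be the interpolation operator onto $P_N$ at the nodes $x_{N,0},\dots,x_{N,N}$. Let $\phi_1,\phi_2$ be real continuous functions on $\mathcal X$ with $\phi_1,\phi_2\in L^2_\omega(\mathcal X)$ and $P_N\subset L^2_\omega(\mathcal X)$; set $\phi=\phi_1\phi_2$, $\psi_1=I_N\phi_1$, $\psi_2=I_N\phi_2$. Then $$|Q(\phi)-Q_N(\phi)|\le\bigl(\|\phi_1\|_\omega+\|\phi_2\|_\omega+\|\psi_1\|_\omega+\|\psi_2\|_\omega\bigr)\bigl(\|\phi_1-\psi_1\|_\omega+\|\phi_2-\psi_2\|_\omega\bigr).$$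
   Context: $P_K$ is the space of real polynomials of degree at most $K$; $\|f\|_\omega=(\int_{\mathcal X}|f|^2\omega)^{1/2}$. *)

(* Defs.v *)
From HB Require Import structures.
From mathcomp Require Import all_boot all_order all_algebra.
From mathcomp Require Import all_classical all_reals all_analysis.
Set Implicit Arguments. Unset Strict Implicit. Unset Printing Implicit Defensive.
Import Order.TTheory GRing.Theory Num.Theory.
Local Open Scope classical_set_scope.
Local Open Scope ring_scope.

Section Defs.
Variable R : realType.
Notation mu := (@lebesgue_measure R).

Definition L2w (X : set R) (w : R -> R) (f : R -> R) : Prop :=
  measurable_fun X f /\
  (\int[mu]_(x in X) ((f x) ^+ 2 * w x)%:E < +oo)%E.

Definition wnorm (X : set R) (w : R -> R) (f : R -> R) : R :=
  Num.sqrt (Rintegral mu X (fun x => `|f x| ^+ 2 * w x)).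

Definition Qint (X : set R) (w : R -> R) (f : R -> R) : R :=
  Rintegral mu X (fun x => f x * w x).

Definition QN (N : nat) (xs ws : 'I_N.+1 -> R) (f : R -> R) : R :=
  \sum_(i < N.+1) ws i * f (xs i).

Definition is_interp (N : nat) (xs : 'I_N.+1 -> R) (f : R -> R) (p : {poly R}) : Prop :=
  (size p <= N.+1)%N /\ forall i, p.[xs i] = f (xs i).
End Defs.

(* Main.v *)
Require Import Defs.
From HB Require Import structures.
From mathcomp Require Import all_boot all_order all_algebra.
From mathcomp Require Import all_classical all_reals all_analysis.
From mathcomp Require Import ring lra zify measurable_realfun.
Import Order.TTheory GRing.Theory Num.Theory.
Import numFieldNormedType.Exports.
Local Open Scope classical_set_scope.
Local Open Scope ring_scope.

Section Helpers.
Variable R : realType.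
Notation mu := (@lebesgue_measure R).
Variables (X : set R) (w : R -> R).
Hypothesis mX : measurable (X : set (measurableTypeR R)).
Hypothesis mw : measurable_fun X w.
Hypothesis w0 : forall x, X x -> 0 <= w x.

Definition integ (f : R -> R) := mu.-integrable X (EFin \o f).

Lemma sq_int {f : R -> R} : L2w X w f -> integ (fun x => f x ^+ 2 * w x).
Proof.
move=> [mf fin]; apply/integrableP; split.
  apply/measurable_EFinP; apply: measurable_funM => //; exact: measurable_funX.
rewrite (le_lt_trans _ fin)// le_eqVlt; apply/orP; left; apply/eqP.
apply: eq_integral => x /[!inE] Xx /=.
by rewrite ger0_norm // mulr_ge0 ?sqr_ge0 ?w0.
Qed.

Lemma L2w_of {f : R -> R} : measurable_fun X f -> integ (fun x => f x ^+ 2 * w x) -> L2w X w f.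
Proof.
move=> mf /integrableP [_ fin]; split => //.
rewrite (le_lt_trans _ fin)// le_eqVlt; apply/orP; left; apply/eqP.
apply: eq_integral => x /[!inE] Xx /=.
by rewrite ger0_norm // mulr_ge0 ?sqr_ge0 ?w0.
Qed.

Lemma integZ (k : R) {h : R -> R} : integ h -> integ (fun x => k * h x).
Proof.
move=> ih; have := integrableZl mX k ih.
by apply: eq_integrable => // x _ /=; rewrite EFinM.
Qed.

Lemma integD {f g : R -> R} : integ f -> integ g -> integ (fun x => f x + g x).
Proof.
move=> i1 i2; have := integrableD mX i1 i2.
by apply: eq_integrable => // x _ /=; rewrite EFinD.
Qed.

Lemma prod_int {f g : R -> R} : L2w X w f -> L2w X w g -> integ (fun x => f x * g x * w x).
Proof.
move=> hf hg; have := integD (sq_int hf) (sq_int hg).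
apply: le_integrable => //.
  apply/measurable_EFinP; apply: measurable_funM => //.
  by apply: measurable_funM; [case: hf|case: hg].
move=> x Xx /=; rewrite lee_fin.
have wx := w0 x Xx.
have hp : 0 <= (f x ^+ 2 + g x ^+ 2) * w x by rewrite mulr_ge0 ?addr_ge0 ?sqr_ge0.
rewrite -mulrDl (ger0_norm hp).
rewrite normrM (ger0_norm wx) ler_wpM2r //.
rewrite normrM; have h1 := sqr_ge0 (f x - g x); have h2 := sqr_ge0 (f x + g x).
have [a0|a0] := lerP 0 (f x); have [b0|b0] := lerP 0 (g x);
  rewrite ?(ger0_norm a0) ?(ltr0_norm a0) ?(ger0_norm b0) ?(ltr0_norm b0); nra.
Qed.

Lemma L2B {f g : R -> R} : L2w X w f -> L2w X w g -> L2w X w (fun x => f x - g x).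
Proof.
move=> hf hg; apply: L2w_of.
  by apply: measurable_funB; [case: hf|case: hg].
have := integD (integD (sq_int hf) (integZ (-2) (prod_int hf hg))) (sq_int hg).
by apply: eq_integrable => // x _ /=; congr EFin; ring.
Qed.

Lemma quad (A B C : R) : 0 <= A -> 0 <= B ->
  (forall t, 0 <= A + 2 * t * C + t ^+ 2 * B) ->
  `|C| <= Num.sqrt A * Num.sqrt B.
Proof.
move=> A0 B0 H.
suff h : C ^+ 2 <= A * B.
  by rewrite -sqrtrM // -sqrtr_sqr ler_sqrt ?mulr_ge0.
have [Bz|Bp] := eqVneq B 0.
  have [Cz|Cn] := eqVneq C 0; first by rewrite Cz Bz; lra.
  have := H (- (A + 1) / (2 * C)); rewrite Bz mulr0 addr0.
  have -> : 2 * (- (A + 1) / (2 * C)) * C = - (A + 1) by field.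
  lra.
have := H (- C / B); rewrite expr2.
have -> : - C / B * (- C / B) * B = C * C / B by field.
have -> : 2 * (- C / B) * C = - 2 * (C * C / B) by field.
move=> h; have : 0 <= (A - C * C / B) * B by apply: mulr_ge0; lra.
by rewrite mulrBl mulfVK // expr2; lra.
Qed.

Lemma CS {f g : R -> R} : L2w X w f -> L2w X w g ->
  `| Rintegral mu X (fun x => f x * g x * w x) | <= wnorm X w f * wnorm X w g.
Proof.
move=> hf hg; rewrite /wnorm.
have nK h : Rintegral mu X (fun x => `|h x| ^+ 2 * w x) = Rintegral mu X (fun x => h x ^+ 2 * w x).
  by apply: eq_Rintegral => x _; rewrite real_normK ?num_real.
rewrite !nK; apply: quad; [apply: Rintegral_ge0 => x Xx; exact: mulr_ge0 (sqr_ge0 _) (w0 x Xx)|apply: Rintegral_ge0 => x Xx; exact: mulr_ge0 (sqr_ge0 _) (w0 x Xx)|].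
move=> t.
have := @Rintegral_ge0 _ _ _ mu X (fun x => (f x + t * g x) ^+ 2 * w x).
have -> : Rintegral mu X (fun x => (f x + t * g x) ^+ 2 * w x) =
  Rintegral mu X (fun x => (f x ^+ 2 * w x + (2 * t) * (f x * g x * w x)) + t ^+ 2 * (g x ^+ 2 * w x)).
  by apply: eq_Rintegral => x _; ring.
rewrite RintegralD //; last 2 first.
- exact: integD (sq_int hf) (integZ _ (prod_int hf hg)).
- exact: integZ (sq_int hg).
rewrite RintegralD //; last 2 first.
- exact: sq_int hf.
- exact: integZ (prod_int hf hg).
rewrite RintegralZl //; last exact: prod_int.
rewrite RintegralZl //; last exact: sq_int.
apply => x Xx; exact: mulr_ge0 (sqr_ge0 _) (w0 x Xx).
Qed.

End Helpers.

Theorem mainTheorem11 (R : realType) (X : set R) (w : R -> R) (N : nat)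
  (xs ws : 'I_N.+1 -> R) (phi1 phi2 : R -> R) (psi1 psi2 : {poly R}) :
  is_interval X ->
  measurable_fun X w -> (forall x, X x -> 0 <= w x) ->
  injective xs -> (forall i, X (xs i)) ->
  (forall p : {poly R}, (size p <= (2 * N).+1)%N ->
     QN xs ws (fun x => p.[x]) = Qint X w (fun x => p.[x])) ->
  {within X, continuous phi1} -> {within X, continuous (phi2 : R -> R)} ->
  L2w X w phi1 -> L2w X w phi2 ->
  (forall p : {poly R}, (size p <= N.+1)%N -> L2w X w (fun x => p.[x])) ->
  is_interp xs phi1 psi1 -> is_interp xs phi2 psi2 ->
  `| Qint X w (fun x => phi1 x * phi2 x) - QN xs ws (fun x => phi1 x * phi2 x) |
  <= (wnorm X w phi1 + wnorm X w phi2
      + wnorm X w (fun x => psi1.[x]) + wnorm X w (fun x => psi2.[x]))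
   * (wnorm X w (fun x => phi1 x - psi1.[x]) + wnorm X w (fun x => phi2 x - psi2.[x])).
Proof.
move=> iX mw w0 _ _ exact_ _ _ h1 h2 hP [s1 i1] [s2 i2].
have mX : measurable (X : set (measurableTypeR R)) := is_interval_measurable iX.
have hp1 := hP _ s1; have hp2 := hP _ s2.
have hd1 := L2B _ _ _ mX mw w0 h1 hp1; have hd2 := L2B _ _ _ mX mw w0 h2 hp2.
have eQN : QN xs ws (fun x => phi1 x * phi2 x) = QN xs ws (fun x => (psi1 * psi2).[x]).
  by apply: eq_bigr => i _; rewrite hornerM i1 i2.
rewrite eQN exact_; last first.
  apply: leq_trans (size_polyMleq _ _) _.
  case: (size psi1) s1 => [|a] s1; case: (size psi2) s2 => [|b] s2 //=; lia.
rewrite /Qint.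
have -> : Rintegral lebesgue_measure X (fun x => phi1 x * phi2 x * w x) -
          Rintegral lebesgue_measure X (fun x => (psi1 * psi2).[x] * w x) =
   Rintegral lebesgue_measure X (fun x => phi1 x * (phi2 x - psi2.[x]) * w x) +
   Rintegral lebesgue_measure X (fun x => (phi1 x - psi1.[x]) * psi2.[x] * w x).
  rewrite -RintegralD //; last 2 first.
  - have hh := prod_int _ _ _ mX mw w0 h1 hd2. exact hh.
  - exact (prod_int _ _ _ mX mw w0 hd1 hp2).
  rewrite -RintegralB //; last 2 first.
  - exact (prod_int _ _ _ mX mw w0 h1 h2).
  - have := prod_int _ _ _ mX mw w0 hp1 hp2.
    by apply: eq_integrable => // x _ /=; rewrite hornerM.
  by apply: eq_Rintegral => x _; rewrite hornerM; ring.
have c1 := CS _ _ _ mX mw w0 h1 hd2; have c2 := CS _ _ _ mX mw w0 hd1 hp2.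
have n1 := sqrtr_ge0 (Rintegral lebesgue_measure X (fun x => `|phi1 x| ^+ 2 * w x)).
have n2 := sqrtr_ge0 (Rintegral lebesgue_measure X (fun x => `|phi2 x| ^+ 2 * w x)).
have n3 := sqrtr_ge0 (Rintegral lebesgue_measure X (fun x => `|psi1.[x]| ^+ 2 * w x)).
have n4 := sqrtr_ge0 (Rintegral lebesgue_measure X (fun x => `|psi2.[x]| ^+ 2 * w x)).
have n5 := sqrtr_ge0 (Rintegral lebesgue_measure X (fun x => `|phi1 x - psi1.[x]| ^+ 2 * w x)).
have n6 := sqrtr_ge0 (Rintegral lebesgue_measure X (fun x => `|phi2 x - psi2.[x]| ^+ 2 * w x)).
rewrite /wnorm in c1 c2 *.
apply: le_trans (ler_normD _ _) _.
set a := Num.sqrt _ in n1 c1 c2 *.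
set b := Num.sqrt _ in n2 c1 c2 *.
set c := Num.sqrt _ in n3 c1 c2 *.
set d := Num.sqrt _ in n4 c1 c2 *.
set e := Num.sqrt _ in n5 c1 c2 *.
set f := Num.sqrt _ in n6 c1 c2 *.
nra.
Qed.
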